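(* Let $X\in T^1(\Sigma)$. Then $X^+X=X=XX^*$ (with pruned operations).
   Context: Let $\Sigma$ be a set. A $\Sigma$-tree is a finite directed graph whose underlying undirected graph is a tree, edges labelled by elements of $\Sigma$, with distinguished start and end vertices such that there is a (possibly empty) directed path from start to end vertex. A morphism $X\to Y$ maps vertices to vertices and edges to edges, preserving initial vertex, terminal vertex and label of each edge, and mapping start/end vertex to start/end vertex; isomorphisms are morphisms bijective on vertices and edges. A retraction is an idempotent morphism $X\to X$, its image a retract; $X$ is pruned if it admits no non-identity retraction. Every tree $X$ has a pruned retract, unique up to isomorphism, whose isomorphism type is $\overline{X}$. $T^1(\Sigma)$ is the set of isomorphism types of pruned $\Sigma$-trees. Unpruned operations: $X\times Y$ identifies the end vertex of (a copy of) $X$ with the start vertex of (a disjoint copy of) $Y$, start vertex that of $X$, end vertex that of $Y$; $X^{(+)}$ is $X$ with end vertex moved to the start vertex; $X^{( * )}$ is $X$ with start vertex moved to the end vertex. Pruned operations: $XY=\overline{X\times Y}$, $X^+=\overline{X^{(+)}}$, $X^*=\overline{X^{( * )}}$. *)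

(* Defs.v *)
From HB Require Import structures.
From mathcomp Require Import all_boot.
Set Implicit Arguments. Unset Strict Implicit. Unset Printing Implicit Defensive.

(* Sigma-graphs: finite directed multigraphs with Sigma-labelled edges and
   distinguished start/end vertices (raw data; tree-ness is a predicate). *)
Record sgraph (Sigma : Type) := SGraph {
  vert : finType;
  edge : finType;
  src : edge -> vert;
  tgt : edge -> vert;
  lab : edge -> Sigma;
  st : vert;
  en : vert }.

Section Defs.
Variable Sigma : Type.
Implicit Types X Y Z P : sgraph Sigma.

Definition uadj X : rel (vert X) :=
  fun u v => [exists e, ((src e == u) && (tgt e == v)) || ((src e == v) && (tgt e == u))].
Definition dadj X : rel (vert X) :=
  fun u v => [exists e, (src e == u) && (tgt e == v)].

Definition utree X : Prop :=
  (forall u v : vert X, connect (@uadj X) u v) /\ #|edge X|.+1 = #|vert X|.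

Definition is_tree X : Prop := utree X /\ connect (@dadj X) (st X) (en X).

Record hom X Y := Hom { hV : vert X -> vert Y; hE : edge X -> edge Y }.

Definition is_morph X Y (f : hom X Y) : Prop :=
  [/\ forall e, src (hE f e) = hV f (src e),
      forall e, tgt (hE f e) = hV f (tgt e),
      forall e, lab (hE f e) = lab e,
      hV f (st X) = st Y & hV f (en X) = en Y].

Definition iso X Y : Prop :=
  exists f : hom X Y, [/\ is_morph f, bijective (hV f) & bijective (hE f)].

Definition retraction X (r : hom X X) : Prop :=
  [/\ is_morph r, forall v, hV r (hV r v) = hV r v & forall e, hE r (hE r e) = hE r e].

Definition pruned X : Prop :=
  forall r : hom X X, retraction r -> (forall v, hV r v = v) /\ (forall e, hE r e = e).

(* P is isomorphic to the image (sub-Sigma-graph) of r : Z -> Z, via an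
   injective morphism P -> Z whose range is exactly the image of r *)
Definition image_of Z (r : hom Z Z) P : Prop :=
  exists i : hom P Z, [/\ is_morph i, injective (hV i), injective (hE i),
    forall v, (exists p, hV i p = v) <-> (exists w, hV r w = v) &
    forall e, (exists p, hE i p = e) <-> (exists d, hE r d = e)].

Definition pruned_retract_of P Z : Prop :=
  pruned P /\ exists r : hom Z Z, retraction r /\ image_of r P.

Definition prodV X Y := (vert X + {v : vert Y | v != st Y})%type.
Definition injY X Y (v : vert Y) : prodV X Y :=
  if insub v is Some w then inr w else inl (en X).
Definition prodE X Y := (edge X + edge Y)%type.

Definition uprod X Y : sgraph Sigma :=
  @SGraph Sigma ((vert X + {v : vert Y | v != st Y})%type : finType)
    ((edge X + edge Y)%type : finType)
    (fun e => match e with inl e => inl (src e) | inr e => injY X (src e) end)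
    (fun e => match e with inl e => inl (tgt e) | inr e => injY X (tgt e) end)
    (fun e => match e with inl e => lab e | inr e => lab e end)
    (inl (st X)) (injY X (en Y)).

Definition uplus X : sgraph Sigma :=
  @SGraph Sigma (vert X) (edge X) (@src _ X) (@tgt _ X) (@lab _ X) (st X) (st X).

Definition ustar X : sgraph Sigma :=
  @SGraph Sigma (vert X) (edge X) (@src _ X) (@tgt _ X) (@lab _ X) (en X) (en X).

End Defs.

(* Main.v *)
Require Import Defs.
From mathcomp Require Import all_boot.
From mathcomp Require Import zify.
Set Implicit Arguments. Unset Strict Implicit. Unset Printing Implicit Defensive.

Lemma iter_idem_aux (T : Type) (h : T -> T) m m' : m < m' ->
  (forall x, iter m h x = iter m' h x) ->
  exists2 k, 0 < k & forall x, iter k h (iter k h x) = iter k h x.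
Proof.
move=> lt E; set p := m' - m.
have pp : 0 < p by rewrite /p; lia.
have per : forall t n x, m <= n -> iter (n + t * p) h x = iter n h x.
  elim=> [|t IH] n x le; first by rewrite mul0n addn0.
  have -> : n + t.+1 * p = (n + t * p - m) + m' by rewrite /p; lia.
  rewrite iterD -E -iterD subnK; last by lia.
  exact: IH.
exists (m' * p); first by rewrite muln_gt0 pp andbT; lia.
move=> x; rewrite -iterD per //; apply: leq_trans (ltnW lt) _; by rewrite leq_pmulr.
Qed.

Lemma iter_idem (T : finType) (h : T -> T) :
  exists2 k, 0 < k & forall x, iter k h (iter k h x) = iter k h x.
Proof.
pose F := fun m : 'I_(#|{ffun T -> T}|.+1) => [ffun x => iter m h x].
have : ~~ injectiveb F.
  apply/negP => /injectiveP /leq_card; by rewrite card_ord ltnn.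
case/injectivePn => a [b] neqab Fab.
have E : forall x, iter a h x = iter b h x.
  by move=> x; have := congr1 (fun f : {ffun T -> T} => f x) Fab; rewrite !ffunE.
case: (ltngtP a b) => [lt|lt|eq].
- exact: (iter_idem_aux lt).
- apply: (iter_idem_aux lt) => x; by rewrite E.
- by move: neqab; rewrite (val_inj eq) eqxx.
Qed.

Section Gen.
Variable Sigma : Type.
Implicit Types X Y Z A B : sgraph Sigma.

Definition hcomp X Y Z (g : hom Y Z) (f : hom X Y) : hom X Z :=
  Hom (fun v => hV g (hV f v)) (fun e => hE g (hE f e)).

Lemma morph_comp X Y Z (g : hom Y Z) (f : hom X Y) :
  is_morph f -> is_morph g -> is_morph (hcomp g f).
Proof.
case=> s1 t1 l1 st1 en1 [s2 t2 l2 st2 en2]; split=> /=.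
- by move=> e; rewrite s2 s1.
- by move=> e; rewrite t2 t1.
- by move=> e; rewrite l2 l1.
- by rewrite st1 st2.
- by rewrite en1 en2.
Qed.

Definition hiter n X (h : hom X X) : hom X X :=
  Hom (iter n (hV h)) (iter n (hE h)).

Lemma morph_iter n X (h : hom X X) : is_morph h -> is_morph (hiter n h).
Proof.
move=> mh; elim: n => [|n IH]; first by split.
exact: (morph_comp IH mh).
Qed.

Lemma pruned_endo_bij A (h : hom A A) : pruned A -> is_morph h ->
  bijective (hV h) /\ bijective (hE h).
Proof.
move=> prA mh.
pose H := fun x : (vert A + edge A)%type =>
  match x with inl v => inl (hV h v) | inr e => inr (hE h e) end.
have iterH : forall n, (forall v, iter n H (inl v) = inl (iter n (hV h) v)) /\
                       (forall e, iter n H (inr e) = inr (iter n (hE h) e)).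
  elim=> [|n [IH1 IH2]]; first by [].
  by split=> x; rewrite !iterS ?IH1 ?IH2.
have [k kp Hk] := iter_idem H.
have ret : retraction (hiter k h).
  split; first exact: morph_iter.
  - move=> v /=; have := Hk (inl v).
    by rewrite (iterH k).1 (iterH k).1 => -[].
  - move=> e /=; have := Hk (inr e).
    by rewrite (iterH k).2 (iterH k).2 => -[].
have [idV idE] := prA _ ret.
move: idV idE; rewrite /=; case: k kp {Hk ret} => // k _ idV idE.
split; apply: injF_bij.
- apply: (@can_inj _ _ _ (iter k (hV h))) => v; by rewrite -iterSr idV.
- apply: (@can_inj _ _ _ (iter k (hE h))) => v; by rewrite -iterSr idE.
Qed.

Lemma factor A B Z (q : hom A Z) (i : hom B Z) :
  is_morph q -> is_morph i -> injective (hV i) -> injective (hE i) ->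
  (forall a, exists b, hV i b = hV q a) -> (forall a, exists b, hE i b = hE q a) ->
  exists f : hom A B, is_morph f.
Proof.
move=> [s1 t1 l1 st1 en1] [s2 t2 l2 st2 en2] iV iE HV HE.
have HV' : forall a, exists b, hV i b == hV q a.
  by move=> a; have [b Hb] := HV a; exists b; apply/eqP.
have HE' : forall a, exists b, hE i b == hE q a.
  by move=> a; have [b Hb] := HE a; exists b; apply/eqP.
pose fV a := xchoose (HV' a).
pose fE a := xchoose (HE' a).
have fVP : forall a, hV i (fV a) = hV q a by move=> a; apply/eqP/(xchooseP (HV' a)).
have fEP : forall a, hE i (fE a) = hE q a by move=> a; apply/eqP/(xchooseP (HE' a)).
exists (Hom fV fE); split=> /=.
- by move=> e; apply: iV; rewrite -s2 fEP fVP s1.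
- by move=> e; apply: iV; rewrite -t2 fEP fVP t1.
- by move=> e; rewrite -l2 fEP l1.
- by apply: iV; rewrite fVP st1 st2.
- by apply: iV; rewrite fVP en1 en2.
Qed.

Lemma bij_from (T U : Type) (f : T -> U) (g : U -> T) :
  bijective (fun x => g (f x)) -> bijective (fun y => f (g y)) -> bijective f.
Proof.
move=> [u1 c1 c1'] [u2 c2 c2'].
have injf : injective f by move=> x y E; rewrite -(c1 x) -(c1 y) /= E.
exists (fun y => g (u2 y)).
- move=> x; apply: injf; exact: c2'.
- move=> y; exact: c2'.
Qed.

Lemma pr_unique A B Z (r1 r2 : hom Z Z) : pruned A -> pruned B ->
  retraction r1 -> image_of r1 A -> retraction r2 -> image_of r2 B -> iso A B.
Proof.
move=> prA prB [mr1 _ _] [i1 [mi1 iV1 iE1 rV1 rE1]] [mr2 _ _] [i2 [mi2 iV2 iE2 rV2 rE2]].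
have [f mf] : exists f : hom A B, is_morph f.
  apply: (factor (q := hcomp r2 i1) (morph_comp mi1 mr2) mi2 iV2 iE2).
  - by move=> a; apply/rV2; exists (hV i1 a).
  - by move=> a; apply/rE2; exists (hE i1 a).
have [g mg] : exists g : hom B A, is_morph g.
  apply: (factor (q := hcomp r1 i2) (morph_comp mi2 mr1) mi1 iV1 iE1).
  - by move=> a; apply/rV1; exists (hV i2 a).
  - by move=> a; apply/rE1; exists (hE i2 a).
have [bgfV bgfE] := pruned_endo_bij prA (morph_comp mf mg).
have [bfgV bfgE] := pruned_endo_bij prB (morph_comp mg mf).
exists f; split=> //.
- exact: (bij_from bgfV bfgV).
- exact: (bij_from bgfE bfgE).
Qed.

Lemma retract_iso Z A (g : hom Z A) (j : hom A Z) :
  is_morph g -> is_morph j -> (forall v, hV g (hV j v) = v) ->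
  (forall e, hE g (hE j e) = e) -> pruned A ->
  forall Q, pruned_retract_of Q Z -> iso Q A.
Proof.
move=> mg mj gjV gjE prA Q [prQ [r [retr imr]]].
apply: (pr_unique prQ prA retr imr (r2 := hcomp j g)).
- split; first exact: morph_comp.
  + by move=> v /=; rewrite gjV.
  + by move=> e /=; rewrite gjE.
- exists j; split=> //.
  + exact: (can_inj gjV).
  + exact: (can_inj gjE).
  + move=> v; split=> [[p <-]|[w <-]]; last by exists (hV g w).
    by exists (hV j p); rewrite /= gjV.
  + move=> e; split=> [[p <-]|[w <-]]; last by exists (hE g w).
    by exists (hE j p); rewrite /= gjE.
Qed.

End Gen.

Theorem proposition4p7 (Sigma : Type) (X : sgraph Sigma) :
  is_tree X -> pruned X ->
  (forall P Q : sgraph Sigma,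
      pruned_retract_of P (uplus X) -> pruned_retract_of Q (uprod P X) -> iso Q X) /\
  (forall P Q : sgraph Sigma,
      pruned_retract_of P (ustar X) -> pruned_retract_of Q (uprod X P) -> iso Q X).
Proof.
move=> _ prX; split=> P Q [prP [rP [retP [iP [miP injiP _ _ _]]]]] prQ.
- have stiP : hV iP (st P) = st X by case: miP.
  have eniP : hV iP (en P) = st X by case: miP.
  have stP : st P = en P by apply: injiP; rewrite stiP eniP.
  pose g : hom (uprod P X) X := @Hom _ (uprod P X) X
    (fun z : (vert P + {v : vert X | v != st X})%type =>
       match z with inl v => hV iP v | inr w => sval w end)
    (fun e : (edge P + edge X)%type => match e with inl e => hE iP e | inr e => e end).
  pose j : hom X (uprod P X) := @Hom _ X (uprod P X) (fun v => injY P v)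
    (fun e => (inr e : (edge P + edge X)%type)).
  have gY : forall v : vert X, hV g (injY P v) = v.
    move=> v; rewrite /injY; case: insubP => [w _ <-|] //.
    by rewrite negbK => /eqP ->.
  apply: (retract_iso (g := g) (j := j)) => //.
  + case: miP => s1 t1 l1 _ _; split.
    * by move=> e; destruct e as [e|e]; [exact: s1 | exact: (esym (gY _))].
    * by move=> e; destruct e as [e|e]; [exact: t1 | exact: (esym (gY _))].
    * by move=> e; destruct e as [e|e]; [exact: l1 | by []].
    * exact: stiP.
    * exact: gY.
  + split=> //=.
    by rewrite /injY insubF ?eqxx // stP.
- have stiP : hV iP (st P) = en X by case: miP.
  have eniP : hV iP (en P) = en X by case: miP.
  have stP : st P = en P by apply: injiP; rewrite stiP eniP.
  pose g : hom (uprod X P) X := @Hom _ (uprod X P) X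
    (fun z : (vert X + {v : vert P | v != st P})%type =>
       match z with inl v => v | inr w => hV iP (sval w) end)
    (fun e : (edge X + edge P)%type => match e with inl e => e | inr e => hE iP e end).
  pose j : hom X (uprod X P) := @Hom _ X (uprod X P) (fun v => inl v)
    (fun e => (inl e : (edge X + edge P)%type)).
  have gY : forall v : vert P, hV g (injY X v) = hV iP v.
    move=> v; rewrite /injY; case: insubP => [w _ <-|] //.
    by rewrite negbK => /eqP ->.
  apply: (retract_iso (g := g) (j := j)) => //.
  + case: miP => s1 t1 l1 _ _; split.
    * by move=> e; destruct e as [e|e]; [by [] | rewrite gY; exact: s1].
    * by move=> e; destruct e as [e|e]; [by [] | rewrite gY; exact: t1].
    * by move=> e; destruct e as [e|e]; [by [] | exact: l1].
    * by [].
    * by rewrite gY.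
  + split=> //=.
    by rewrite /injY -stP insubF ?eqxx.
Qed.
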